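(* Every $\mathbb{G}$-predictable process $Y$ satisfies the global optional splitting formula at $\tau$ with respect to $\mathbb{F}$, i.e. there exist $Y'\in\mathcal{O}(\mathbb{F})$ and a $\mathcal{B}[0,\infty]\otimes\mathcal{O}(\mathbb{F})$-measurable function $Y''$ on $[0,\infty]\times(\mathbb{R}_+\times\Omega)$ with $Y=Y'\mathbf{1}_{[0,\tau)}+Y''(\tau)\mathbf{1}_{[\tau,\infty)}$.
   Context: Let $(\Omega,\mathcal{A},\mathbb{Q})$ be a probability space with a right-continuous filtration $\mathbb{F}=(\mathcal{F}_t)_{t\ge0}$ such that $\mathcal{F}_0$ contains $\mathcal{N}^{\mathcal{F}_\infty}$, where for a $\sigma$-algebra $\mathcal{T}\subset\mathcal{A}$, $\mathcal{N}^{\mathcal{T}}$ denotes the $\sigma$-algebra generated by all subsets of $\mathcal{T}$-measurable $\mathbb{Q}$-null sets. Let $\tau$ be a random variable with values in $[0,\infty]$, let $\mathcal{N}=\mathcal{N}^{\sigma(\tau)\vee\mathcal{F}_\infty}$, and let $\mathbb{G}=(\mathcal{G}_t)_{t\ge0}$ with $\mathcal{G}_t=\mathcal{N}\vee\bigcap_{s>t}(\mathcal{F}_s\vee\sigma(\tau\wedge s))$. Identities between processes are understood up to indistinguishability outside an $\mathcal{N}$-measurable $\mathbb{Q}$-null set. $Y''(\tau)$ denotes the process $(t,\omega)\mapsto Y''(\tau(\omega),t,\omega)$. *)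

(* Defs.v *)
From HB Require Import structures.
From mathcomp Require Import all_boot all_order all_algebra.
From mathcomp Require Import all_classical all_reals all_analysis measurable_realfun.
Set Implicit Arguments. Unset Strict Implicit. Unset Printing Implicit Defensive.
Import Order.TTheory GRing.Theory Num.Theory.
Import numFieldNormedType.Exports.
Local Open Scope classical_set_scope.
Local Open Scope ring_scope.

Section defs.
Context {R : realType} {d : measure_display} {Omega : measurableType d}.

(** A (real-valued) process is [Y : R -> Omega -> R]; only times [t >= 0]
    matter. The time-state space R_+ x Omega is the subset [RpO] of R * Omega. *)
Definition RpO : set (R * Omega) := [set p | 0 <= p.1].

Definition meas_wrt (G : set (set Omega)) (f : Omega -> R) : Prop :=
  forall B : set R, measurable B -> G (f @^-1` B).

Definition proc_preim (Y : R -> Omega -> R) (B : set R) : set (R * Omega) :=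
  RpO `&` [set p | B (Y p.1 p.2)].

Definition adapted (G : R -> set (set Omega)) (Y : R -> Omega -> R) : Prop :=
  forall t, 0 <= t -> meas_wrt (G t) (Y t).

Definition cadlag (Y : R -> Omega -> R) : Prop :=
  forall w, (forall t, 0 <= t -> (fun s => Y s w) @ t^'+ --> Y t w) /\
            (forall t, 0 < t -> cvg ((fun s => Y s w) @ t^'-)).

Definition leftcont (Y : R -> Omega -> R) : Prop :=
  forall w t, 0 < t -> (fun s => Y s w) @ t^'- --> Y t w.

Definition optional_sa (G : R -> set (set Omega)) : set (set (R * Omega)) :=
  <<s RpO, [set C | exists Y B, [/\ adapted G Y, cadlag Y, measurable B &
                                     C = proc_preim Y B]] >>.

Definition predictable_sa (G : R -> set (set Omega)) : set (set (R * Omega)) :=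
  <<s RpO, [set C | exists Y B, [/\ adapted G Y, leftcont Y, measurable B &
                                     C = proc_preim Y B]] >>.

Definition measurable_proc (S : set (set (R * Omega))) (Y : R -> Omega -> R) :=
  forall B : set R, measurable B -> S (proc_preim Y B).

Definition ERpRpO : set (\bar R * (R * Omega)) :=
  [set p | (0 <= p.1)%E /\ 0 <= p.2.1].

Definition borel_x_optional (G : R -> set (set Omega)) :
    set (set (\bar R * (R * Omega))) :=
  <<s ERpRpO, [set E | exists (B : set (\bar R)) C, [/\ measurable B, B `<=` [set x | (0 <= x)%E],
                                       optional_sa G C &
                                       E = [set p | B p.1 /\ C p.2]]] >>.

Definition measurable_param_proc (G : R -> set (set Omega))
    (Y'' : \bar R -> R -> Omega -> R) : Prop :=
  forall B : set R, measurable B ->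
    borel_x_optional G (ERpRpO `&` [set p | B (Y'' p.1 p.2.1 p.2.2)]).

Definition sigma_rv (f : Omega -> \bar R) : set (set Omega) :=
  <<s [set A | exists B : set (\bar R), measurable B /\ A = f @^-1` B] >>.

Definition join_sa (G1 G2 : set (set Omega)) : set (set Omega) := <<s G1 `|` G2>>.

Definition F_infty (F : R -> set (set Omega)) : set (set Omega) :=
  <<s [set A | exists t, 0 <= t /\ F t A] >>.

Definition null_sa (Q : set Omega -> \bar R) (T : set (set Omega)) : set (set Omega) :=
  <<s [set B | exists A, [/\ T A, Q A = 0%E & B `<=` A]] >>.

Definition enlarged (Q : set Omega -> \bar R) (F : R -> set (set Omega))
    (tau : Omega -> \bar R) (t : R) : set (set Omega) :=
  join_sa (null_sa Q (join_sa (sigma_rv tau) (F_infty F)))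
    [set A | forall s, t < s ->
       join_sa (F s) (sigma_rv (fun w => Order.min (tau w) s%:E)) A].

End defs.

(* Main.v *)
Require Import Defs.
From HB Require Import structures.
From mathcomp Require Import all_boot all_order all_algebra.
From mathcomp Require Import all_classical all_reals all_analysis measurable_realfun.
Import Order.TTheory GRing.Theory Num.Theory.
Import numFieldNormedType.Exports.
From mathcomp Require Import lra.
Local Open Scope classical_set_scope.
Local Open Scope ring_scope.

Lemma glue_meas {R : realType} {d} {U : measurableType d} (kap : U -> nat) (g : nat -> U -> R) :
  (forall k, measurable [set z | kap z = k]) -> (forall k, measurable_fun setT (g k)) ->
  measurable_fun setT (fun z => g (kap z) z).
Proof.
move=> mk mg _ B mB; rewrite setTI.
rewrite (_ : _ @^-1` _ = \bigcup_k ([set z | kap z = k] `&` (g k @^-1` B))).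
  apply: bigcupT_measurable => k; apply: measurableI => //.
  by rewrite -[X in measurable X]setTI; exact: mg.
apply/seteqP; split => z /=.
  by move=> h; exists (kap z).
by move=> [k _ [<-]].
Qed.

Section Generic.
Context {R : realType} {T : Type} {d1 d2 : measure_display}
  {T1 : measurableType d1} {T2 : measurableType d2}
  (p1 : T -> T1) (p2 : T -> T2) (E : T -> bool) (Nul : set (set T)).
Hypothesis NulU : forall N : (set T)^nat, (forall n, Nul (N n)) ->
  exists M, Nul M /\ forall n, N n `<=` M.
Hypothesis Nul_ne : exists N, Nul N.

Definition splitS (S : set T) := exists C1 C2 N,
  [/\ measurable C1, measurable C2, Nul N &
   forall x, ~ N x -> (S x <-> (if E x then C1 (p1 x) else C2 (p2 x)))].

Definition splitF (Y : T -> R) := exists Y1 Y2 N,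
  [/\ measurable_fun setT Y1, measurable_fun setT Y2, Nul N &
   forall x, ~ N x -> Y x = if E x then Y1 (p1 x) else Y2 (p2 x)].

Lemma Nul2 {N1 N2} : Nul N1 -> Nul N2 ->
  exists M, [/\ Nul M, N1 `<=` M & N2 `<=` M].
Proof.
move=> h1 h2; have [|M [NM sM]] := NulU (fun n => if n is 0%N then N1 else N2).
  by case.
by exists M; split => //; [exact: (sM 0%N) | exact: (sM 1%N)].
Qed.

Lemma splitS_ext S S' N : splitS S -> Nul N ->
  (forall x, ~ N x -> (S x <-> S' x)) -> splitS S'.
Proof.
move=> [C1 [C2 [N1 [m1 m2 n1 h]]]] nN hS.
have [M [nM s1 s2]] := Nul2 n1 nN.
exists C1, C2, M; split => // x Mx.
rewrite -hS; last by move=> /s2.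
by apply: h => /s1.
Qed.

Lemma splitS_sigma : sigma_algebra setT splitS.
Proof.
split.
- have [N nN] := Nul_ne; exists set0, set0, N; split => // x _.
  by case: (E x).
- move=> S [C1 [C2 [N [m1 m2 nN h]]]].
  exists (~` C1), (~` C2), N; split => //; try exact: measurableC.
  move=> x Nx; have := h x Nx; case: (E x) => /= hx; split.
  + by move=> [_ nS] c; apply: nS; apply/hx.
  + by move=> nc; split => // /hx.
  + by move=> [_ nS] c; apply: nS; apply/hx.
  + by move=> nc; split => // /hx.
- move=> S hS.
  have hex : forall n, exists c : (set T1 * set T2) * set T,
    [/\ measurable c.1.1, measurable c.1.2, Nul c.2 &
     forall x, ~ c.2 x -> (S n x <-> (if E x then c.1.1 (p1 x) else c.1.2 (p2 x)))].
    move=> n; have [C1 [C2 [N H]]] := hS n; by exists ((C1, C2), N).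
  have [f hf] := choice hex.
  have nf : forall n, Nul (f n).2 by move=> n; case: (hf n).
  have [M [nM sM]] := NulU (fun n => (f n).2) nf.
  exists (\bigcup_n (f n).1.1), (\bigcup_n (f n).1.2), M; split => //.
  + by apply: bigcupT_measurable => n; case: (hf n).
  + by apply: bigcupT_measurable => n; case: (hf n).
  + move=> x Mx.
    have hx n : S n x <-> (if E x then (f n).1.1 (p1 x) else (f n).1.2 (p2 x)).
      by case: (hf n) => _ _ _; apply => /sM.
    case: (E x) hx => hx; split.
    * by move=> [n _ /hx]; exists n.
    * by move=> [n _ /hx]; exists n.
    * by move=> [n _ /hx]; exists n.
    * by move=> [n _ /hx]; exists n.
Qed.

Lemma splitF_preimage Y B : splitF Y -> measurable B -> splitS (Y @^-1` B).
Proof.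
move=> [Y1 [Y2 [N [m1 m2 nN h]]]] mB.
exists (Y1 @^-1` B), (Y2 @^-1` B), N; split => //.
- by rewrite -[X in measurable X]setTI; exact: m1.
- by rewrite -[X in measurable X]setTI; exact: m2.
- by move=> x Nx /=; rewrite h //; case: (E x).
Qed.


Lemma meas_asbool (C : set T1) : measurable C ->
  measurable_fun setT (fun z => `[< C z >]).
Proof.
move=> mC; apply: (measurable_fun_bool true).
rewrite setTI (_ : _ @^-1` _ = C) //; apply/seteqP; split => z /=.
  by move/asboolP.
by move=> Cz; apply/asboolP.
Qed.

Lemma meas_asbool2 (C : set T2) : measurable C ->
  measurable_fun setT (fun z => `[< C z >]).
Proof.
move=> mC; apply: (measurable_fun_bool true).
rewrite setTI (_ : _ @^-1` _ = C) //; apply/seteqP; split => z /=.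
  by move/asboolP.
by move=> Cz; apply/asboolP.
Qed.

Definition rq (k : nat) : R := if @unpickle rat k is Some q then ratr q else 0.
Lemma rq_pickle q : rq (pickle q) = ratr q. Proof. by rewrite /rq pickleK. Qed.

Lemma einfs0 (u : (\bar R)^nat) : einfs u 0 = ereal_inf (range u).
Proof.
rewrite /einfs/sdrop/=; congr ereal_inf; apply/seteqP; split => _ [k ? <-].
  by exists k.
by exists k.
Qed.

Lemma inf_rq (y : R) (u : (\bar R)^nat) :
  (forall k, u k = if y < rq k then (rq k)%:E else +oo%E) ->
  ereal_inf (range u) = y%:E.
Proof.
move=> hu; apply/eqP; rewrite eq_le; apply/andP; split.
  apply/lee_addgt0Pr => e e0.
  have yye : y < y + e by rewrite ltrDl.
  have [q] := @rat_in_itvoo R y (y + e) yye.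
  rewrite in_itv /= => /andP[yq qy].
  apply: (@le_trans _ _ (u (pickle q))); first by apply: ereal_inf_lbound; exists (pickle q).
  by rewrite hu rq_pickle yq -EFinD lee_fin ltW.
apply/ereal_infP => _ [k _ <-]; rewrite hu; case: ifP => h.
  by rewrite lee_fin ltW.
exact: leey.
Qed.

Lemma DD Y : (forall r, splitS [set x | Y x < r]) -> splitF Y.
Proof.
move=> hY.
have hex : forall k, exists c : (set T1 * set T2) * set T,
  [/\ measurable c.1.1, measurable c.1.2, Nul c.2 & forall x, ~ c.2 x ->
    (Y x < rq k <-> if E x then c.1.1 (p1 x) else c.1.2 (p2 x))].
  by move=> k; have [C1 [C2 [N H]]] := hY (rq k); exists ((C1, C2), N).
have [f hf] := choice hex.
have nf : forall n, Nul (f n).2 by move=> n; case: (hf n).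
have [M [nM sM]] := NulU (fun n => (f n).2) nf.
pose g1 k z := if `[< (f k).1.1 z >] then (rq k)%:E else +oo%E.
pose g2 k z := if `[< (f k).1.2 z >] then (rq k)%:E else +oo%E.
exists (fun z => fine (einfs (g1 ^~ z) 0)), (fun z => fine (einfs (g2 ^~ z) 0)), M.
split => //.
- apply: (measurableT_comp (@fine_measurable R setT measurableT)).
  apply: measurable_fun_einfs => k; apply: measurable_fun_ifT => //.
  by apply: meas_asbool; case: (hf k).
- apply: (measurableT_comp (@fine_measurable R setT measurableT)).
  apply: measurable_fun_einfs => k; apply: measurable_fun_ifT => //.
  by apply: meas_asbool2; case: (hf k).
- move=> x Mx.
  have hk k : Y x < rq k <-> if E x then (f k).1.1 (p1 x) else (f k).1.2 (p2 x).
    by case: (hf k) => _ _ _; apply => /sM.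
  case: (E x) hk => hk; rewrite einfs0 (@inf_rq (Y x)) // => k.
    case: (boolP (Y x < rq k)) => h.
      by rewrite /g1 asboolT //; apply/hk.
    by rewrite /g1 asboolF // => /hk h'; move/negP: h.
  case: (boolP (Y x < rq k)) => h.
    by rewrite /g2 asboolT //; apply/hk.
  by rewrite /g2 asboolF // => /hk h'; move/negP: h.
Qed.

Lemma LIM (Yn : nat -> T -> R) (Y : T -> R) N0 : (forall n, splitF (Yn n)) -> Nul N0 ->
  (forall x, ~ N0 x -> Yn ^~ x @ \oo --> Y x) -> splitF Y.
Proof.
move=> hY nN0 hcv.
have hex : forall n, exists c : ((T1 -> R) * (T2 -> R)) * set T,
  [/\ measurable_fun setT c.1.1, measurable_fun setT c.1.2, Nul c.2 &
   forall x, ~ c.2 x -> Yn n x = if E x then c.1.1 (p1 x) else c.1.2 (p2 x)].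
  by move=> n; have [Y1 [Y2 [N H]]] := hY n; exists ((Y1, Y2), N).
have [f hf] := choice hex.
have nf : forall n, Nul (if n is n'.+1 then (f n').2 else N0).
  by case => [|n] //; case: (hf n).
have [M [nM sM]] := NulU _ nf.
exists (fun z => fine (limn_esup (fun n => ((f n).1.1 z)%:E))),
       (fun z => fine (limn_esup (fun n => ((f n).1.2 z)%:E))), M.
split => //.
- apply: (measurableT_comp (@fine_measurable R setT measurableT)).
  apply: measurable_fun_limn_esup => n; apply/measurable_EFinP.
  by case: (hf n).
- apply: (measurableT_comp (@fine_measurable R setT measurableT)).
  apply: measurable_fun_limn_esup => n; apply/measurable_EFinP.
  by case: (hf n).
- move=> x Mx.
  have hn n : Yn n x = if E x then (f n).1.1 (p1 x) else (f n).1.2 (p2 x).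
    by case: (hf n) => _ _ _; apply => /(sM n.+1).
  have cx : Yn ^~ x @ \oo --> Y x by apply: hcv => /(sM 0%N).
  case: (E x) hn => hn.
    have cv : (fun n => ((f n).1.1 (p1 x))%:E) @ \oo --> (Y x)%:E.
      apply: cvg_EFin; first by apply: nearW.
      by rewrite (_ : (fine \o _) = Yn ^~ x) //; apply: funext => n /=; rewrite hn.
    rewrite is_cvg_limn_esupE; last by apply/cvg_ex; eexists; exact: cv.
    by rewrite (cvg_lim _ cv).
  have cv : (fun n => ((f n).1.2 (p2 x))%:E) @ \oo --> (Y x)%:E.
    apply: cvg_EFin; first by apply: nearW.
    by rewrite (_ : (fine \o _) = Yn ^~ x) //; apply: funext => n /=; rewrite hn.
  rewrite is_cvg_limn_esupE; last by apply/cvg_ex; eexists; exact: cv.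
  by rewrite (cvg_lim _ cv).
Qed.

Section PWsec.
Variables (kap : T -> nat) (kap1 : T1 -> nat) (kap2 : T2 -> nat).
Hypotheses (hk1 : forall x, kap1 (p1 x) = kap x) (hk2 : forall x, kap2 (p2 x) = kap x).
Hypotheses (mk1 : forall k, measurable [set z | kap1 z = k])
  (mk2 : forall k, measurable [set z | kap2 z = k]).

Lemma PW (X : nat -> T -> R) :
  (forall k, exists Y1 Y2 N, [/\ measurable_fun setT Y1, measurable_fun setT Y2, Nul N &
     forall x, ~ N x -> kap x = k -> X k x = if E x then Y1 (p1 x) else Y2 (p2 x)]) ->
  splitF (fun x => X (kap x) x).
Proof.
move=> hX.
have hex : forall n, exists c : ((T1 -> R) * (T2 -> R)) * set T,
  [/\ measurable_fun setT c.1.1, measurable_fun setT c.1.2, Nul c.2 &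
   forall x, ~ c.2 x -> kap x = n -> X n x = if E x then c.1.1 (p1 x) else c.1.2 (p2 x)].
  by move=> n; have [Y1 [Y2 [N H]]] := hX n; exists ((Y1, Y2), N).
have [f hf] := choice hex.
have nf : forall n, Nul (f n).2 by move=> n; case: (hf n).
have [M [nM sM]] := NulU _ nf.
exists (fun z => (f (kap1 z)).1.1 z), (fun z => (f (kap2 z)).1.2 z), M; split => //.
- apply: (glue_meas kap1 (fun k z => (f k).1.1 z)) => // k; by case: (hf k).
- apply: (glue_meas kap2 (fun k z => (f k).1.2 z)) => // k; by case: (hf k).
- move=> x Mx; rewrite hk1 hk2.
  by case: (hf (kap x)) => _ _ _; apply => // /sM.
Qed.
End PWsec.

End Generic.

Lemma sigma_trace {U : Type} (D : set U) (G : set (set U)) :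
  sigma_algebra D G -> sigma_algebra setT [set A | G (A `&` D)].
Proof.
move=> [G0 GC GU]; split => /=.
- by rewrite set0I.
- move=> A GA; rewrite (_ : _ `&` D = D `\` (A `&` D)) //.
    by apply: GC.
  apply/seteqP; split => x /=.
    by move=> [[_ nA] Dx]; split => // -[].
  by move=> [Dx nAD]; split => //; split => // Ax; apply: nAD.
- by move=> A GA; rewrite setI_bigcupl; apply: GU.
Qed.

Section Main.
Context (R : realType) (d : measure_display) (Omega : measurableType d)
  (Q : probability Omega R) (F : R -> set (set Omega)) (tau : Omega -> \bar R).
Hypotheses (HFsa : forall t, 0 <= t -> sigma_algebra setT (F t))
  (HFmeas : forall t, 0 <= t -> F t `<=` measurable)
  (HFincr : forall s t, 0 <= s -> s <= t -> F s `<=` F t)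
  (HFright : forall t, 0 <= t -> F t = [set A | forall s, t < s -> F s A])
  (HF0 : null_sa Q (F_infty F) `<=` F 0)
  (Htau_meas : measurable_fun setT tau)
  (Htau_ge0 : forall w, (0 <= tau w)%E).

Definition J := join_sa (sigma_rv tau) (F_infty F).
Definition NulO : set (set Omega) := [set N | J N /\ Q N = 0%E].

Lemma J_meas : J `<=` measurable.
Proof.
apply: smallest_sub; first exact: sigma_algebra_measurable.
move=> A [].
  apply: smallest_sub; first exact: sigma_algebra_measurable.
  move=> _ [B [mB ->]]; rewrite -[X in measurable X]setTI; exact: Htau_meas.
apply: smallest_sub; first exact: sigma_algebra_measurable.
by move=> A0 [t [t0 Ft]]; exact: (HFmeas _ t0 _ Ft).
Qed.

Lemma NulO_U (N : (set Omega)^nat) : (forall n, NulO (N n)) ->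
  exists M, NulO M /\ forall n, N n `<=` M.
Proof.
move=> hN; exists (\bigcup_n N n); split; last by move=> n x Nx; exists n.
have JN : J (\bigcup_n N n) by apply: sigma_algebra_bigcup => n; case: (hN n).
split => //; apply/eqP; rewrite eq_le; apply/andP; split; last exact: measure_ge0.
have hs := @measure_sigma_subadditive _ _ _ Q (\bigcup_n N n) N
  (fun n => J_meas _ (proj1 (hN n))) (J_meas _ JN) (fun x h => h).
apply: (le_trans hs).
by rewrite eseries0 // => n _ _; case: (hN n).
Qed.

Lemma NulO_ne : exists N, NulO N.
Proof. by exists set0; split; [exact: sigma_algebra0|exact: measure0]. Qed.

Definition NulP : set (set (R * Omega)) :=
  [set X | exists N, NulO N /\ X = [set x | x.1 < 0 \/ N x.2]].

Lemma NulP_U (N : (set (R * Omega))^nat) : (forall n, NulP (N n)) ->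
  exists M, NulP M /\ forall n, N n `<=` M.
Proof.
move=> hN; have [f hf] := choice hN.
have [M [nM sM]] := @NulO_U f (fun n => (hf n).1).
exists [set x | x.1 < 0 \/ M x.2]; split; first by exists M.
move=> n x; rewrite (hf n).2 /= => -[|/sM]; by [left|right].
Qed.

Lemma NulP_ne : exists N, NulP N.
Proof. by have [N nN] := NulO_ne; exists [set x | x.1 < 0 \/ N x.2]; exists N. Qed.

Definition Osa : set (set (R * Omega)) := [set A | optional_sa F (A `&` RpO)].
Lemma Osa_sigma : sigma_algebra setT Osa.
Proof. exact: sigma_trace (smallest_sigma_algebra _ _). Qed.
Definition TO := g_sigma_algebraType Osa.
Lemma measTO (A : set TO) : measurable A <-> Osa A.
Proof. by rewrite measurable_g_measurableTypeE //; exact: Osa_sigma. Qed.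

Definition BOsa : set (set (\bar R * (R * Omega))) :=
  [set A | borel_x_optional F (A `&` ERpRpO)].
Lemma BOsa_sigma : sigma_algebra setT BOsa.
Proof. exact: sigma_trace (smallest_sigma_algebra _ _). Qed.
Definition TBO := g_sigma_algebraType BOsa.
Lemma measTBO (A : set TBO) : measurable A <-> BOsa A.
Proof. by rewrite measurable_g_measurableTypeE //; exact: BOsa_sigma. Qed.

Definition TF (a : R) := g_sigma_algebraType (F a).
Lemma measTF {a} {A : set (TF a)} : 0 <= a -> measurable A <-> F a A.
Proof. by move=> a0; rewrite measurable_g_measurableTypeE //; exact: HFsa. Qed.

Definition rect (c : R) : set (set (\bar R * Omega)) :=
  [set W | exists B A, [/\ measurable B, F c A & W = B `*` A]].
Definition TBF (c : R) := g_sigma_algebraType (rect c).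

Lemma meas_wrt_cst G (x : R) : sigma_algebra setT G -> meas_wrt G (fun _ : Omega => x).
Proof.
move=> hG; rewrite /meas_wrt => B mB; case: hG => G0 GC _; case: (pselect (B x)) => h.
  rewrite (_ : (fun _ => x) @^-1` B = setT); last by apply/seteqP; split.
  by have := GC set0 G0; rewrite setD0.
by rewrite (_ : (fun _ => x) @^-1` B = set0); last by apply/seteqP; split.
Qed.

Lemma Fset0 {t} : 0 <= t -> F t set0.
Proof. by move=> t0; case: (HFsa _ t0). Qed.
Lemma FsetT {t} : 0 <= t -> F t setT.
Proof. by move=> t0; case: (HFsa _ t0) => G0 C _; have := C set0 G0; rewrite setD0. Qed.

Lemma meas_wrt_incr {s t} {A : Omega -> R} : 0 <= s -> s <= t -> meas_wrt (F s) A -> meas_wrt (F t) A.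
Proof. by move=> s0 st mA B mB; apply: (HFincr _ _ s0 st); exact: mA. Qed.

Definition step (c : R) (A : Omega -> R) : R -> Omega -> R :=
  fun t w => if c <= t then A w else 0.

Lemma step_proc {c} {A : Omega -> R} : 0 <= c -> meas_wrt (F c) A ->
  measurable_proc (optional_sa F) (step c A).
Proof.
move=> c0 mA B mB; apply: sub_sigma_algebra; exists (step c A), B; split => //.
- move=> t t0; have -> : step c A t = if c <= t then A else (fun _ => 0).
    by rewrite /step; case: ifP.
  case: ifP => ct.
    exact: (meas_wrt_incr c0 ct mA).
  exact: meas_wrt_cst (HFsa _ t0).
- move=> w; split.
  + move=> t t0; apply: cvg_near_cst; rewrite /step; case: (leP c t) => ct.
      near=> s; rewrite ifT //; apply: (le_trans ct); apply: ltW.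
      by near: s; exact: nbhs_right_gt.
    near=> s; rewrite ifF //; apply/negbTE; rewrite -ltNge.
    by near: s; exact: nbhs_right_lt.
  + move=> t t0; apply/cvg_ex; rewrite /step; case: (ltP c t) => ct.
      exists (A w); apply: cvg_near_cst; near=> s; rewrite ifT //; apply: ltW.
      by near: s; exact: nbhs_left_gt.
    exists 0; apply: cvg_near_cst; near=> s; rewrite ifF //; apply/negbTE.
    rewrite -ltNge; apply: (lt_le_trans _ ct).
    by near: s; exact: nbhs_left_lt.
Unshelve. all: by end_near.
Qed.

Lemma proc_TO {Y : R -> Omega -> R} : measurable_proc (optional_sa F) Y ->
  measurable_fun (setT : set TO) (fun z : TO => Y z.1 z.2).
Proof.
move=> mY _ B mB; rewrite setTI; apply/measTO.
by rewrite /Osa /= setIC; exact: mY.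
Qed.

Lemma TO_proc (Y1 : TO -> R) : measurable_fun setT Y1 ->
  measurable_proc (optional_sa F) (fun t w => Y1 (t, w)).
Proof.
move=> mY B mB; have := mY measurableT B mB; rewrite setTI => /measTO.
rewrite /Osa /proc_preim setIC.
by congr (optional_sa F (_ `&` _)); apply/seteqP; split => -[t w].
Qed.

Definition splitA a c := @splitS Omega _ _ (TF a) (TBF c) (fun w => w)
  (fun w => (tau w, w)) (fun w => (a%:E < tau w)%E) NulO.

Lemma splitA_sigma a c : sigma_algebra setT (splitA a c).
Proof. exact: (splitS_sigma _ _ _ _ NulO_U NulO_ne). Qed.

Lemma rectP c (W : set (\bar R * Omega)) : rect c W -> measurable (W : set (TBF c)).
Proof. by move=> h; apply: sub_sigma_algebra. Qed.

Lemma level_exact {s S} : 0 <= s ->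
  join_sa (F s) (sigma_rv (fun w => Order.min (tau w) s%:E)) S -> splitA s s S.
Proof.
move=> s0; apply: smallest_sub; first exact: splitA_sigma.
move=> A [FA|].
  exists A, (setT `*` A), set0; split => //.
  - by apply/(measTF s0).
  - by apply: rectP; exists setT, A; split.
  - by split; [exact: sigma_algebra0|exact: measure0].
  - by move=> w _; case: ifP => _ //=; split => // -[].
apply: smallest_sub; first exact: splitA_sigma.
move=> _ [B [mB ->]].
exists [set _ | B s%:E], ((fun u => Order.min u s%:E) @^-1` B `*` setT), set0.
split => //.
- apply/(measTF s0); case: (pselect (B s%:E)) => h.
    by rewrite (_ : [set _ | _] = setT); [exact: FsetT|apply/seteqP; split].
  by rewrite (_ : [set _ | _] = set0); [exact: Fset0|apply/seteqP; split].
- apply: rectP; exists ((fun u => Order.min u s%:E) @^-1` B), setT; split => //.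
    rewrite -[X in measurable X]setTI.
    by apply: measurable_mine => //; exact: measurable_cst.
  exact: FsetT.
- by split; [exact: sigma_algebra0|exact: measure0].
- move=> w _ /=; case: ifP => h /=.
    by rewrite (_ : Order.min _ _ = s%:E) //; apply/min_idPr; apply: ltW.
  by split => [?|[]].
Qed.


Definition sq (a c : R) (n : nat) : R := a + (c - a) / n.+1%:R.

Lemma sq_gt {a c} n : a < c -> a < sq a c n.
Proof.
move=> ac; have h : 0 < n.+1%:R :> R by rewrite ltr0Sn.
by rewrite /sq ltrDl divr_gt0 // subr_gt0.
Qed.

Lemma sq_le a c n : a < c -> sq a c n <= c.
Proof.
move=> ac; have h : 0 < n.+1%:R :> R by rewrite ltr0Sn.
rewrite /sq -lerBrDl ler_pdivrMr //; apply: ler_peMr; first by rewrite subr_ge0 ltW.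
by rewrite ler1n.
Qed.

Lemma sq_decr {a c m n} : a < c -> (m <= n)%N -> sq a c n <= sq a c m.
Proof.
move=> ac mn; rewrite /sq lerD2l; apply: ler_wpM2l; first by rewrite subr_ge0 ltW.
by rewrite lef_pV2 ?posrE ?ltr0Sn // ler_nat.
Qed.

Lemma sq_small {a c e} : a < c -> 0 < e ->
  exists M, forall n, (M <= n)%N -> sq a c n < a + e.
Proof.
move=> ac e0; exists (Num.Def.trunc ((c - a) / e)) => n Mn.
apply: (le_lt_trans (sq_decr ac Mn)); rewrite /sq ltrD2l.
have h : 0 < (Num.Def.trunc ((c - a) / e)).+1%:R :> R by rewrite ltr0Sn.
rewrite ltr_pdivrMr // mulrC -ltr_pdivrMr //.
exact: real_truncnS_gt (num_real _).
Qed.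

Definition lsup (A : (set Omega)^nat) : set Omega :=
  \bigcap_m \bigcup_n A (m + n)%N.

Lemma lsup_iff {A : (set Omega)^nat} {P : Prop} {w} M :
  (forall n, (M <= n)%N -> (P <-> A n w)) -> (P <-> lsup A w).
Proof.
move=> h; split.
  move=> p m _; exists M => //; apply/(h (m + M)%N) => //.
  exact: leq_addl.
move=> /(_ M I) [n _ hn]; apply/(h (M + n)%N) => //; exact: leq_addr.
Qed.

Lemma Fcup s (A : (set Omega)^nat) : 0 <= s -> (forall n, F s (A n)) ->
  F s (\bigcup_n A n).
Proof. by move=> s0 hA; case: (HFsa _ s0) => _ _; apply. Qed.

Lemma Fcap s (A : (set Omega)^nat) : 0 <= s -> (forall n, F s (A n)) ->
  F s (\bigcap_n A n).
Proof.
move=> s0 hA; case: (HFsa _ s0) => _ FC FU.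
rewrite -[X in F s X]setCK setC_bigcap -setTD; apply: (FC).
by apply: (FU) => n; rewrite -setTD; apply: (FC).
Qed.

Lemma lsup_F {a c} {A : (set Omega)^nat} : 0 <= a -> a < c ->
  (forall n, F (sq a c n) (A n)) -> F a (lsup A).
Proof.
move=> a0 ac hA; rewrite (HFright _ a0) => s as_.
have e0 : 0 < s - a by rewrite subr_gt0.
have [M hM] := sq_small ac e0.
have sM : sq a c M <= s.
  by apply: ltW; have := hM M (leqnn _); rewrite addrC subrK.
have sq0 n : 0 <= sq a c n by apply: (le_trans a0); apply: ltW; exact: sq_gt.
have -> : lsup A = \bigcap_m \bigcup_n A (M + m + n)%N.
  apply/seteqP; split => w /= h m _.
    by have [n _ hn] := h (M + m)%N I; exists n.
  have [n _ hn] := h m I; exists (M + n)%N => //.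
  by rewrite addnA (addnC m).
apply: (HFincr _ _ (sq0 M) sM); apply: Fcap => // m; apply: Fcup => // n.
apply: (HFincr _ _ (sq0 _) _ _ (hA _)); apply: sq_decr => //.
by rewrite -addnA leq_addr.
Qed.

Definition Kset (a : R) : set (set Omega) :=
  [set A | forall s, a < s ->
     join_sa (F s) (sigma_rv (fun w => Order.min (tau w) s%:E)) A].

Lemma sq0 {a c} n : 0 <= a -> a < c -> 0 <= sq a c n.
Proof. by move=> a0 ac; apply: (le_trans a0); apply: ltW; exact: sq_gt. Qed.

Lemma eventually_lt {a c w} : 0 <= a -> a < c -> (a%:E < tau w)%E ->
  exists M, forall n, (M <= n)%N -> ((sq a c n)%:E < tau w)%E.
Proof.
move=> a0 ac; case: (tau w) => [r| |] //=.
- rewrite lte_fin => ar; have e0 : 0 < r - a by rewrite subr_gt0.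
  have [M hM] := sq_small ac e0; exists M => n /hM.
  by rewrite addrC subrK lte_fin.
- by move=> _; exists 0%N => n _; exact: ltey.
Qed.

Lemma split_K a c S : 0 <= a -> a < c -> Kset a S -> splitA a c S.
Proof.
move=> a0 ac hS.
have hex : forall n, exists C : set Omega * set Omega,
  [/\ F (sq a c n) C.1, NulO C.2 &
   forall w, ~ C.2 w -> ((sq a c n)%:E < tau w)%E -> (S w <-> C.1 w)].
  move=> n; have [C1 [C2 [N [m1 _ nN h]]]] :=
    level_exact (sq0 n a0 ac) (hS _ (sq_gt n ac)).
  exists (C1, N); split => //; first by apply/(measTF (sq0 n a0 ac)).
  by move=> w Nw hw; have := h w Nw; rewrite hw.
have [f hf] := choice hex.
have [C1c [C2c [Nc [_ m2c nNc hc]]]] := level_exact (le_trans a0 (ltW ac)) (hS _ ac).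
have nf : forall n, NulO (if n is n'.+1 then (f n').2 else Nc).
  by case => [|n] //; case: (hf n).
have [M [nM sM]] := NulO_U _ nf.
exists (lsup (fun n => (f n).1)), C2c, M; split => //.
- apply/(measTF a0); apply: (lsup_F a0 ac) => n; by case: (hf n).
- move=> w Mw /=; case: ifP => aw.
    have [M0 hM0] := eventually_lt a0 ac aw.
    apply: (lsup_iff M0) => n /hM0 hn.
    by case: (hf n) => _ _; apply => // /(sM n.+1).
  have := hc w (fun h => Mw (sM 0%N _ h)); rewrite ifF //.
  apply/negbTE; apply: contraFN aw => cw; apply: lt_trans cw.
  by rewrite lte_fin.
Qed.

Lemma split_null (P : set (set Omega)) :
  sigma_algebra setT P ->
  (forall B N, NulO N -> B `<=` N -> P B) ->
  null_sa Q J `<=` P.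
Proof.
move=> sP hP; apply: smallest_sub => // B [N [JN QN BN]].
exact: (hP B N).
Qed.

Lemma split_G a c : 0 <= a -> a < c -> enlarged Q F tau a `<=` splitA a c.
Proof.
move=> a0 ac; apply: smallest_sub; first exact: splitA_sigma.
move=> A [].
  apply: split_null; first exact: splitA_sigma.
  move=> B N nN BN; exists set0, set0, N; split => // w Nw.
  by split => [/BN //|]; case: ifP.
exact: split_K.
Qed.

Lemma section_F s (W : set (\bar R * Omega)) u : 0 <= s -> <<s rect s >> W ->
  F s [set w | W (u, w)].
Proof.
move=> s0; move: W; apply: smallest_sub.
  split => /=.
  - by rewrite (_ : [set w | set0 (u, w)] = set0) //; exact: Fset0.
  - move=> W hW; rewrite (_ : [set w | _] = setT `\` [set w | W (u, w)]) //.
    by case: (HFsa _ s0) => _ C _; apply: C.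
  - by move=> W hW; apply: Fcup.
move=> _ [B [A [mB FA ->]]] /=.
case: (pselect (B u)) => h.
  by rewrite (_ : [set w | _] = A) //; apply/seteqP; split => w //= [].
by rewrite (_ : [set w | _] = set0); [exact: Fset0|apply/seteqP; split => w //= []].
Qed.

Definition splitZ := @splitS Omega _ _ (TF 0) (TF 0) (fun w => w)
  (fun w => w) (fun w => (0%:E < tau w)%E) NulO.

Lemma splitZ_sigma : sigma_algebra setT splitZ.
Proof. exact: (splitS_sigma _ _ _ _ NulO_U NulO_ne). Qed.

Lemma split_K0 S : Kset 0 S -> splitZ S.
Proof.
move=> hS; have ac : 0 < 1 :> R by [].
have hex : forall n, exists C : (set Omega * set Omega) * set Omega,
  [/\ F (sq 0 1 n) C.1.1, F (sq 0 1 n) C.1.2, NulO C.2 &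
   forall w, ~ C.2 w -> (((sq 0 1 n)%:E < tau w)%E -> (S w <-> C.1.1 w)) /\
                        (tau w = 0%E -> (S w <-> C.1.2 w))].
  move=> n; have s0 := sq0 n (lexx 0) ac.
  have [C1 [C2 [N [m1 m2 nN h]]]] := level_exact s0 (hS _ (sq_gt n ac)).
  exists ((C1, [set w | C2 (0%E, w)]), N); split => //.
  - by apply/(measTF s0).
  - exact: section_F.
  move=> w Nw; split => hw; first by have := h w Nw; rewrite hw.
  have := h w Nw; rewrite hw ifF //; apply/negbTE; rewrite -leNgt lee_fin.
  exact: s0.
have [f hf] := choice hex.
have nf : forall n, NulO (f n).2 by move=> n; case: (hf n).
have [M [nM sM]] := NulO_U _ nf.
exists (lsup (fun n => (f n).1.1)), (lsup (fun n => (f n).1.2)), M; split => //.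
- apply/(measTF (lexx 0)); apply: (lsup_F (lexx 0) ac) => n; by case: (hf n).
- apply/(measTF (lexx 0)); apply: (lsup_F (lexx 0) ac) => n; by case: (hf n).
- move=> w Mw /=; case: ifP => aw.
    have [M0 hM0] := eventually_lt (lexx 0) ac aw.
    apply: (lsup_iff M0) => n /hM0 hn.
    by case: (hf n) => _ _ _ /(_ w (fun h => Mw (sM n w h))) [h _]; apply: h.
  have t0 : tau w = 0%E.
    by apply/eqP; rewrite eq_le Htau_ge0 andbT leNgt aw.
  apply: (lsup_iff 0%N) => n _.
  by case: (hf n) => _ _ _ /(_ w (fun h => Mw (sM n w h))) [_ h]; apply: h.
Qed.

Lemma split_G0 : enlarged Q F tau 0 `<=` splitZ.
Proof.
apply: smallest_sub; first exact: splitZ_sigma.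
move=> A [].
  apply: split_null; first exact: splitZ_sigma.
  move=> B N nN BN; exists set0, set0, N; split => // w Nw.
  by split => [/BN //|]; case: ifP.
exact: split_K0.
Qed.

Lemma DLa {a c} {X : Omega -> R} : 0 <= a -> a < c ->
  meas_wrt (enlarged Q F tau a) X ->
  exists (A : TF a -> R) (h : TBF c -> R) N,
    [/\ measurable_fun setT A, measurable_fun setT h, NulO N &
     forall w, ~ N w -> X w = if (a%:E < tau w)%E then A w else h (tau w, w)].
Proof.
move=> a0 ac mX.
suff : @splitF R Omega _ _ (TF a) (TBF c) (fun w => w) (fun w => (tau w, w))
  (fun w => (a%:E < tau w)%E) NulO X by [].
apply: (@DD R Omega _ _ (TF a) (TBF c) (fun w => w) (fun w => (tau w, w))
  (fun w => (a%:E < tau w)%E) NulO NulO_U X) => r.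
apply: (split_G _ _ a0 ac).
have := mX _ (measurable_itv `]-oo, r[).
by rewrite (_ : X @^-1` _ = [set x | X x < r]) //; apply/seteqP; split => x /=;
  rewrite in_itv /=.
Qed.

Lemma DL0 {X : Omega -> R} : meas_wrt (enlarged Q F tau 0) X ->
  exists (A : TF 0 -> R) (A0 : TF 0 -> R) N,
    [/\ measurable_fun setT A, measurable_fun setT A0, NulO N &
     forall w, ~ N w -> X w = if (0%:E < tau w)%E then A w else A0 w].
Proof.
move=> mX.
suff : @splitF R Omega _ _ (TF 0) (TF 0) (fun w => w) (fun w => w)
  (fun w => (0%:E < tau w)%E) NulO X by [].
apply: (@DD R Omega _ _ (TF 0) (TF 0) (fun w => w) (fun w => w)
  (fun w => (0%:E < tau w)%E) NulO NulO_U X) => r.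
apply: split_G0.
have := mX _ (measurable_itv `]-oo, r[).
by rewrite (_ : X @^-1` _ = [set x | X x < r]) //; apply/seteqP; split => x /=;
  rewrite in_itv /=.
Qed.

Lemma TF_meas_wrt {a} {A : TF a -> R} : 0 <= a -> measurable_fun setT A ->
  meas_wrt (F a) A.
Proof.
by move=> a0 mA B mB; have := mA measurableT B mB; rewrite setTI => /(measTF a0).
Qed.

Definition ind (A : set Omega) : Omega -> R := fun w => if `[< A w >] then 1 else 0.

Lemma ind_meas {s A} : 0 <= s -> F s A -> meas_wrt (F s) (ind A).
Proof.
move=> s0 FA B mB; case: (HFsa _ s0) => F0 FC _.
have eA : [set w | `[< A w >]] = A.
  by apply/seteqP; split => w /=; [move/asboolP|move=> h; apply/asboolP].
case: (pselect (B 1)) => h1; case: (pselect (B 0)) => h0.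
- rewrite (_ : _ @^-1` _ = setT); first exact: FsetT.
  by apply/seteqP; split => w //= _; rewrite /ind; case: ifP.
- rewrite (_ : _ @^-1` _ = A) //.
  apply/seteqP; split => w /=; rewrite /ind; case: (boolP `[< A w >]).
  + by move/asboolP.
  + by [].
  + by [].
  + by move=> /negP nA Aw; exfalso; apply: nA; apply/asboolP.
- rewrite (_ : _ @^-1` _ = setT `\` A); first exact: FC.
  apply/seteqP; split => w /=; rewrite /ind; case: (boolP `[< A w >]).
  + by [].
  + by move=> /asboolP nA _; split.
  + by move=> /asboolP Aw [].
  + by [].
- rewrite (_ : _ @^-1` _ = set0) //.
  by apply/seteqP; split => w //=; rewrite /ind; case: ifP.
Qed.

Lemma Osa_step_set {c A} : 0 <= c -> F c A -> Osa [set z | c <= z.1 /\ A z.2].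
Proof.
move=> c0 FA; change (optional_sa F ([set z | c <= z.1 /\ A z.2] `&` RpO)).
have -> : [set z | c <= z.1 /\ A z.2] `&` RpO = proc_preim (step c (ind A)) [set 1].
  rewrite /proc_preim setIC; congr (_ `&` _).
  apply/seteqP; split => -[t w] /=; rewrite /step /ind.
    by move=> [-> /asboolP ->].
  case: (boolP (c <= t)) => ct; case: (boolP `[< A w >]) => Aw //=.
  - by move=> _; split => //; apply/asboolP.
  - by move/eqP; rewrite eq_sym oner_eq0.
  - by move/eqP; rewrite eq_sym oner_eq0.
  - by move/eqP; rewrite eq_sym oner_eq0.
exact: (step_proc c0 (ind_meas c0 FA) [set 1] (measurable_set1 1)).
Qed.


Lemma e_ge0_meas : measurable [set x : \bar R | (0 <= x)%E].
Proof.
rewrite (_ : [set x : \bar R | (0 <= x)%E] = [set` `[0%E, +oo[]).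
  exact: emeasurable_itv.
by apply/seteqP; split => x /=; rewrite in_itv /= andbT.
Qed.

Lemma e_gt_meas (a : R) : measurable [set x : \bar R | (a%:E < x)%E].
Proof.
rewrite (_ : [set x : \bar R | (a%:E < x)%E] = [set` `]a%:E, +oo[]).
  exact: emeasurable_itv.
by apply/seteqP; split => x /=; rewrite in_itv /= andbT.
Qed.

Lemma Osa_RpO : optional_sa F RpO.
Proof. by have /measTO := @measurableT _ TO; rewrite /Osa /= setTI. Qed.

Lemma snd_meas : measurable_fun (setT : set TBO) (fun p : TBO => (p.2 : TO)).
Proof.
move=> _ A /measTO mA; rewrite setTI; apply/measTBO.
apply: sub_sigma_algebra; exists [set x | (0 <= x)%E], (A `&` RpO); split => //.
- exact: e_ge0_meas.
- by apply/seteqP; split => -[u [t w]] /=; [move=> [Au [u0 t0]]|move=> [u0 [Au t0]]].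
Qed.

Lemma gt_meas (a : R) : measurable ([set p : TBO | (a%:E < p.1)%E]).
Proof.
apply/measTBO; apply: sub_sigma_algebra.
exists [set x | (a%:E < x)%E /\ (0 <= x)%E], RpO; split => //.
- by apply: measurableI; [exact: e_gt_meas|exact: e_ge0_meas].
- by move=> x [].
- exact: Osa_RpO.
- by apply/seteqP; split => -[u [t w]] /=; [move=> [au [u0 t0]]|move=> [[au u0] t0]].
Qed.

Lemma ge_TO c : measurable [set z : TO | c <= z.1].
Proof.
apply/measTO; case: (leP 0 c) => c0.
  have := Osa_step_set c0 (FsetT c0).
  by rewrite (_ : [set z | c <= z.1 /\ setT z.2] = [set z | c <= z.1]) //;
    apply/seteqP; split => z /=; [case|].
rewrite /Osa /= (_ : _ `&` RpO = RpO); first exact: Osa_RpO.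
apply/seteqP; split => z; first by case.
by move=> z0; split => //=; apply: ltW; apply: (lt_le_trans c0).
Qed.

Lemma ge_TBO c : measurable [set p : TBO | c <= p.2.1].
Proof.
have := snd_meas measurableT _ (ge_TO c); rewrite setTI.
by congr measurable.
Qed.

Lemma guard_meas c (h : TBF c -> R) : 0 <= c -> measurable_fun setT h ->
  measurable_fun (setT : set TBO) (fun p : TBO => if c <= p.2.1 then h (p.1, p.2.2) else 0).
Proof.
move=> c0 mh.
have K : <<s rect c >> `<=` [set W | measurable [set p : TBO | c <= p.2.1 /\ W (p.1, p.2.2)]].
  apply: smallest_sub.
    split => /=.
    - rewrite (_ : [set p : TBO | c <= p.2.1 /\ set0 (p.1, p.2.2)] = set0) //.
      by apply/seteqP; split => p // [].
    - move=> W hW.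
      rewrite (_ : [set p : TBO | c <= p.2.1 /\ (setT `\` W) (p.1, p.2.2)] = [set p : TBO | c <= p.2.1] `\`
          [set p : TBO | c <= p.2.1 /\ W (p.1, p.2.2)]).
        by apply: measurableD => //; exact: ge_TBO.
      apply/seteqP; split => p /=; first by move=> [cp [_ nW]]; split => // -[].
      by move=> [cp nW]; split => //; split => // Wp; apply: nW.
    - move=> W hW.
      rewrite (_ : [set p : TBO | c <= p.2.1 /\ (\bigcup_n W n) (p.1, p.2.2)] = \bigcup_n
          [set p : TBO | c <= p.2.1 /\ W n (p.1, p.2.2)]).
        exact: bigcupT_measurable.
      apply/seteqP; split => p /=; first by move=> [cp [n _ Wn]]; exists n.
      by move=> [n _ [cp Wn]]; split => //; exists n.
  move=> _ [B [A [mB FA ->]]] /=; apply/measTBO; apply: sub_sigma_algebra.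
  exists (B `&` [set x | (0 <= x)%E]), ([set z | c <= z.1 /\ A z.2] `&` RpO).
  split.
  - by apply: measurableI => //; exact: e_ge0_meas.
  - by move=> x [].
  - exact: Osa_step_set.
  - apply/seteqP; split => -[u [t w]] /=.
      by move=> [[ct [Bu Aw]] [u0 t0]].
    by move=> [[Bu u0] [[ct Aw] t0]].
move=> _ V mV; rewrite setTI.
rewrite (_ : _ @^-1` V = [set p : TBO | c <= p.2.1 /\ (h @^-1` V) (p.1, p.2.2)] `|`
   (~` [set p : TBO | c <= p.2.1] `&` [set _ | V 0])).
  apply: measurableU.
    apply: K; have := mh measurableT V mV; rewrite setTI; exact.
  apply: measurableI; first by apply: measurableC; exact: ge_TBO.
  case: (pselect (V 0)) => h0.
    by rewrite (_ : [set _ | V 0] = setT) //; apply/seteqP; split.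
  by rewrite (_ : [set _ | V 0] = set0) //; apply/seteqP; split.
apply/seteqP; split => p /=; case: ifP => cp.
- by move=> hV; left.
- by move=> hV; right; split => // /negbT; rewrite cp.
- by case => [[]//|[]].
- by case => [[]|[]]; rewrite ?cp.
Qed.

Definition pP1 (x : R * Omega) : TO := x.
Definition pP2 (x : R * Omega) : TBO := (tau x.2, x).
Definition EP (x : R * Omega) : bool := (x.1%:E < tau x.2)%E.

Lemma piece_pos {a c} {Xa : Omega -> R} : 0 <= a -> a < c ->
  meas_wrt (enlarged Q F tau a) Xa ->
  exists (Y1 : TO -> R) (Y2 : TBO -> R) N,
    [/\ measurable_fun setT Y1, measurable_fun setT Y2, NulP N &
     forall x, ~ N x -> c <= x.1 -> Xa x.2 = if EP x then Y1 (pP1 x) else Y2 (pP2 x)].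
Proof.
move=> a0 ac mX; have [A [h [N [mA mh nN hX]]]] := DLa a0 ac mX.
have c0 : 0 <= c by apply: (le_trans a0); exact: ltW.
have mAc : meas_wrt (F c) A := meas_wrt_incr a0 (ltW ac) (TF_meas_wrt a0 mA).
pose Y1 := fun z : TO => step c A z.1 z.2.
have mY1 : measurable_fun setT Y1 := proc_TO (step_proc c0 mAc).
exists Y1, (fun p : TBO => if (a%:E < p.1)%E then Y1 p.2
                          else (if c <= p.2.1 then h (p.1, p.2.2) else 0)),
  [set x | x.1 < 0 \/ N x.2]; split => //.
- apply: measurable_fun_ifT => //.
  + apply: (measurable_fun_bool true); rewrite setTI.
    rewrite (_ : _ @^-1` _ = [set p : TBO | (a%:E < p.1)%E]); first exact: gt_meas.
    by apply/seteqP; split => p.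
  + exact: (measurableT_comp mY1 snd_meas).
  + exact: guard_meas.
- by exists N.
- move=> [t w] /= Nx ct; rewrite /EP /pP1 /pP2 /= hX; last by move=> Nw; apply: Nx; right.
  rewrite /Y1 /step /= ct; case: (boolP (t%:E < tau w)%E) => tw.
    have aw : (a%:E < tau w)%E.
      by apply: (le_lt_trans _ tw); rewrite lee_fin (le_trans (ltW ac) ct).
    by rewrite aw.
  by case: ifP => //; rewrite ct.
Qed.

Lemma piece_zero {X0 : Omega -> R} : meas_wrt (enlarged Q F tau 0) X0 ->
  exists (Y1 : TO -> R) (Y2 : TBO -> R) N,
    [/\ measurable_fun setT Y1, measurable_fun setT Y2, NulP N &
     forall x, ~ N x -> x.1 <= 0 -> X0 x.2 = if EP x then Y1 (pP1 x) else Y2 (pP2 x)].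
Proof.
move=> mX; have [A [A0 [N [mA mA0 nN hX]]]] := DL0 mX.
have l0 : 0 <= 0 :> R by [].
pose Y1 := fun z : TO => step 0 A z.1 z.2.
pose Y0 := fun z : TO => step 0 A0 z.1 z.2.
have mY1 : measurable_fun setT Y1 := proc_TO (step_proc l0 (TF_meas_wrt l0 mA)).
have mY0 : measurable_fun setT Y0 := proc_TO (step_proc l0 (TF_meas_wrt l0 mA0)).
exists Y1, (Y0 \o (fun p : TBO => (p.2 : TO))), [set x | x.1 < 0 \/ N x.2].
split => //.
- exact: (measurableT_comp mY0 snd_meas).
- by exists N.
- move=> [t w] /= Nx t0.
  have -> : t = 0 by apply/eqP; rewrite eq_le t0 leNgt; apply/negP => tn; apply: Nx; left.
  rewrite /EP /pP1 /pP2 /Y1 /Y0 /step /= lexx hX //.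
  by move=> Nw; apply: Nx; right.
Qed.

Lemma min_ex (P : nat -> Prop) : (exists k, P k) ->
  exists k, P k /\ forall j, (j < k)%N -> ~ P j.
Proof.
move=> [k Pk]; elim/ltn_ind: k Pk => k IH Pk.
case: (pselect (exists j, (j < k)%N /\ P j)) => [[j [jk Pj]]|h].
  exact: (IH j jk Pj).
by exists k; split => // j jk Pj; apply: h; exists j.
Qed.

Lemma first_meas {dd} {U : measurableType dd} (S : nat -> set U) k :
  (forall j, measurable (S j)) ->
  measurable [set z | S k z /\ forall j, (j < k)%N -> ~ S j z].
Proof.
move=> mS.
rewrite (_ : [set z | _] = S k `&` \bigcap_j (if (j < k)%N then ~` S j else setT)).
  apply: measurableI => //; apply: bigcapT_measurable => j.
  by case: ifP => _ //; exact: measurableC.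
apply/seteqP; split => z /=.
  by move=> [Sk h]; split => // j _; case: ifP => // jk; exact: h.
by move=> [Sk h]; split => // j jk; have := h j I; rewrite jk.
Qed.

Definition eps (n : nat) : R := (n.+1%:R)^-1.

Lemma eps_gt0 n : 0 < eps n.
Proof. by rewrite /eps invr_gt0 ltr0Sn. Qed.

Lemma eps_small {e} : 0 < e -> exists M, forall m, (M <= m)%N -> eps m < e.
Proof.
move=> e0; exists (Num.Def.trunc e^-1) => m Mm.
have h : e^-1 < m.+1%:R.
  apply: (lt_le_trans (real_truncnS_gt (num_real _))).
  by rewrite ler_nat.
rewrite /eps -(invrK e) ltf_pV2 ?posrE ?ltr0Sn ?invr_gt0 //.
Qed.

Definition Ipc (n k : nat) : set R :=
  if k is k'.+1 then [set t | 0 < @rq R k' /\ @rq R k' <= t /\ t < @rq R k' + eps n]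
  else [set t | t <= 0].

Definition ak (n k : nat) : R :=
  if k is k'.+1 then Order.max (@rq R k' / 2) (@rq R k' - eps n) else 0.

Definition kap (n : nat) (t : R) : nat :=
  xget 0%N [set k | Ipc n k t /\ forall j, (j < k)%N -> ~ Ipc n j t].

Lemma Ipc_cover n t : exists k, Ipc n k t.
Proof.
case: (leP t 0) => t0; first by exists 0%N.
have hm : Order.max 0 (t - eps n) < t.
  by rewrite gt_max t0 /= ltrBlDr ltrDl eps_gt0.
have [q] := @rat_in_itvoo R _ _ hm; rewrite in_itv /= => /andP[qm qt].
move: qm; rewrite gt_max => /andP[q0 qe].
exists (pickle q).+1; rewrite /= rq_pickle; split => //; split; first exact: ltW.
by rewrite -ltrBlDr.
Qed.

Lemma kap_spec n t : Ipc n (kap n t) t /\ forall j, (j < kap n t)%N -> ~ Ipc n j t.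
Proof.
apply: (@xgetPex _ 0%N [set k | Ipc n k t /\ forall j, (j < k)%N -> ~ Ipc n j t]).
exact: min_ex (Ipc_cover n t).
Qed.

Lemma kap_eq n t k : Ipc n k t -> (forall j, (j < k)%N -> ~ Ipc n j t) -> kap n t = k.
Proof.
move=> Ik hk; apply: xget_unique; first by split.
move=> y [Iy hy]; case: (ltngtP y k) => // yk.
- by exfalso; apply: (hk y yk).
- by exfalso; apply: (hy k yk).
Qed.

Lemma kap_set n k : [set t | kap n t = k] =
  [set t | Ipc n k t /\ forall j, (j < k)%N -> ~ Ipc n j t].
Proof.
apply/seteqP; split => t /=.
  by move=> <-; exact: kap_spec.
by move=> [Ik hk]; exact: kap_eq.
Qed.

Lemma gt_TO c : measurable [set z : TO | c < z.1].
Proof.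
rewrite (_ : [set z | _] = \bigcup_m [set z : TO | c + eps m <= z.1]).
  by apply: bigcupT_measurable => m; exact: ge_TO.
apply/seteqP; split => z /=.
  move=> cz; have e0 : 0 < z.1 - c by rewrite subr_gt0.
  have [M hM] := eps_small e0; exists M => //=.
  by rewrite -lerBrDl; apply: ltW; exact: hM.
move=> [m _ /= h]; apply: lt_le_trans h.
by rewrite ltrDl eps_gt0.
Qed.

Lemma Ipc_TO n k : measurable [set z : TO | Ipc n k z.1].
Proof.
case: k => [|k] /=.
  rewrite (_ : [set z | _] = ~` [set z : TO | 0 < z.1]).
    by apply: measurableC; exact: gt_TO.
  by apply/seteqP; split => z /=; rewrite leNgt => /negP.
case: (boolP (0 < rq k)) => h.
  rewrite (_ : [set z | _] = [set z : TO | rq k <= z.1] `\` [set z : TO | rq k + eps n <= z.1]).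
    by apply: measurableD; exact: ge_TO.
  apply/seteqP; split => z /=.
    by move=> [_ [rz zr]] ; split => //; rewrite leNgt zr.
  by move=> [rz /negP]; rewrite -ltNge.
rewrite (_ : [set z | _] = set0) //; apply/seteqP; split => z //= [h' _].
by move/negP: h.
Qed.

Lemma snd_pre {S : set TO} : measurable S -> measurable [set p : TBO | S p.2].
Proof. by move=> mS; have := snd_meas measurableT _ mS; rewrite setTI. Qed.

Lemma kap_TO n k : measurable [set z : TO | kap n z.1 = k].
Proof.
rewrite (_ : [set z | _] = [set z : TO | Ipc n k z.1 /\
   forall j, (j < k)%N -> ~ Ipc n j z.1]).
  by apply: (first_meas (fun j => [set z : TO | Ipc n j z.1])) => j; exact: Ipc_TO.
by apply/seteqP; split => z /=; rewrite -[kap n z.1 = k]/([set t | kap n t = k] z.1) kap_set.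
Qed.

Lemma kap_TBO n k : measurable [set p : TBO | kap n p.2.1 = k].
Proof. by have := snd_pre (kap_TO n k). Qed.

Lemma ak_prop {n t} : 0 < t ->
  ak n (kap n t) < t /\ t - ak n (kap n t) < eps n + eps n.
Proof.
move=> t0; have [I _] := kap_spec n t.
move: I; case: (kap n t) => [|k] /= I.
  by move: t0; rewrite ltNge I.
case: I => r0 [rt tr].
have m1 : rq k - eps n <= Order.max (rq k / 2) (rq k - eps n) by rewrite le_max lexx orbT.
split.
  rewrite gt_max; apply/andP; split.
    apply: lt_le_trans rt; rewrite ltr_pdivrMr //; lra.
  apply: lt_le_trans rt; rewrite ltrBlDr ltrDl; exact: eps_gt0.
move: m1; set m := Order.max _ _ => m1; lra.
Qed.

Lemma convZ (Z : R -> Omega -> R) : leftcont Z -> forall t w, 0 <= t ->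
  (fun n => Z (ak n (kap n t)) w) @ \oo --> Z t w.
Proof.
move=> hZ t w; rewrite le_eqVlt => /orP[/eqP <-|t0].
  have k0 n : kap n 0 = 0%N by apply: kap_eq => //=.
  rewrite (_ : (fun n => _) = fun _ => Z 0 w); first exact: cvg_cst.
  by apply: funext => n; rewrite k0.
have := hZ w t t0; move/cvg_at_leftP; apply; split.
  by move=> n; case: (@ak_prop n t t0).
apply/cvgrPdist_lt => e e0.
have e2 : 0 < e / 2 by rewrite divr_gt0.
have [M hM] := eps_small e2.
near=> n; have [h1 h2] := @ak_prop n t t0.
rewrite ger0_norm; last by rewrite subr_ge0 ltW.
have : eps n < e / 2 by apply: hM; near: n; exact: nbhs_infty_ge.
move: h2; set u := ak _ _; set v := eps n; lra.
Unshelve. all: by end_near.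
Qed.

Definition splitP := @splitS (R * Omega)%type _ _ TO TBO pP1 pP2 EP NulP.
Definition splitFP (Yf : R * Omega -> R) :=
  @splitF R (R * Omega)%type _ _ TO TBO pP1 pP2 EP NulP Yf.

Lemma Zn_split (Z : R -> Omega -> R) n : adapted (enlarged Q F tau) Z ->
  splitFP (fun x => Z (ak n (kap n x.1)) x.2).
Proof.
move=> hZ.
apply: (@PW R (R * Omega)%type _ _ TO TBO pP1 pP2 EP NulP NulP_U
  (fun x => kap n x.1) (fun z => kap n z.1) (fun p => kap n p.2.1)
  (fun x => erefl) (fun x => erefl) (kap_TO n) (kap_TBO n)
  (fun k x => Z (ak n k) x.2)) => k.
case: k => [|k].
  have [Y1 [Y2 [N [m1 m2 nN h]]]] := piece_zero (hZ 0 (lexx 0)).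
  exists Y1, Y2, N; split => // x Nx kx; apply: h => //.
  by have := (kap_spec n x.1).1; rewrite kx.
case: (boolP (0 < @rq R k)) => r0.
  have a0 : 0 <= ak n k.+1.
    by rewrite /ak le_max; apply/orP; left; rewrite divr_ge0 // ltW.
  have ac : ak n k.+1 < @rq R k.
    rewrite /ak gt_max; apply/andP; split; first by rewrite ltr_pdivrMr //; lra.
    by rewrite ltrBlDr ltrDl eps_gt0.
  have [Y1 [Y2 [N [m1 m2 nN h]]]] := piece_pos a0 ac (hZ _ a0).
  exists Y1, Y2, N; split => // x Nx kx; apply: h => //.
  by have := (kap_spec n x.1).1; rewrite kx /= => -[_ [cx _]].
have [N nN] := NulP_ne.
exists (fun _ => 0), (fun _ => 0), N; split => //; try exact: measurable_cst.
move=> x _ kx; exfalso; have := (kap_spec n x.1).1; rewrite kx /= => -[h _].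
by move/negP: r0.
Qed.

Lemma NulP0 : NulP [set x | x.1 < 0 \/ set0 x.2].
Proof. by exists set0; split => //; split; [exact: sigma_algebra0|exact: measure0]. Qed.

Lemma Z_split {Z : R -> Omega -> R} : adapted (enlarged Q F tau) Z -> leftcont Z ->
  splitFP (fun x => Z x.1 x.2).
Proof.
move=> hZ hl.
apply: (@LIM R _ _ _ TO TBO pP1 pP2 EP NulP NulP_U
  (fun n x => Z (ak n (kap n x.1)) x.2) _ [set x | x.1 < 0 \/ set0 x.2]).
- by move=> n; exact: Zn_split.
- exact: NulP0.
- move=> [t w] /= h; apply: convZ => //; rewrite leNgt; apply/negP => t0.
  by apply: h; left.
Qed.

Lemma splitP_ext {S S'} : splitP S ->
  (forall x, 0 <= x.1 -> (S x <-> S' x)) -> splitP S'.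
Proof.
move=> hS h; apply: (splitS_ext _ _ _ _ NulP_U _ _ _ hS NulP0) => x hx; apply: h.
by rewrite leNgt; apply/negP => t0; apply: hx; left.
Qed.

Lemma splitP_sigmaT : sigma_algebra setT splitP.
Proof. exact: (splitS_sigma _ _ _ _ NulP_U NulP_ne). Qed.

Lemma gen_split (Z : R -> Omega -> R) B : adapted (enlarged Q F tau) Z -> leftcont Z ->
  measurable B -> splitP (proc_preim Z B).
Proof.
move=> hZ hl mB.
have := @splitF_preimage R _ _ _ TO TBO pP1 pP2 EP NulP _ B (Z_split hZ hl) mB.
move=> h; apply: (splitP_ext h) => -[t w] /= t0.
by split => [h'|[]//].
Qed.

Lemma P_split : predictable_sa (enlarged Q F tau) `<=` splitP.
Proof.
apply: smallest_sub.
  case: splitP_sigmaT => S0 SC SU; split => //.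
  move=> A hA; apply: (splitP_ext (SC _ hA)) => x x0 /=.
  by split => [[_ nA]|[_ nA]].
by move=> _ [Z [B [hZ hl mB ->]]]; exact: gen_split.
Qed.

Lemma Y_split (Y : R -> Omega -> R) :
  measurable_proc (predictable_sa (enlarged Q F tau)) Y -> splitFP (fun x => Y x.1 x.2).
Proof.
move=> HY.
apply: (@DD R _ _ _ TO TBO pP1 pP2 EP NulP NulP_U) => r.
have := P_split _ (HY _ (measurable_itv `]-oo, r[)).
move=> h; apply: (splitP_ext h) => -[t w] /= t0.
rewrite /proc_preim /=; split => [[_]|h1]; first by rewrite in_itv.
by split => //; rewrite in_itv /= h1.
Qed.

End Main.

Theorem mainTheorem3 (R : realType) (d : measure_display) (Omega : measurableType d)
  (Q : probability Omega R) (F : R -> set (set Omega)) (tau : Omega -> \bar R)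
  (HFsa : forall t, 0 <= t -> sigma_algebra setT (F t))
  (HFmeas : forall t, 0 <= t -> F t `<=` measurable)
  (HFincr : forall s t, 0 <= s -> s <= t -> F s `<=` F t)
  (HFright : forall t, 0 <= t -> F t = [set A | forall s, t < s -> F s A])
  (HF0 : null_sa Q (F_infty F) `<=` F 0)
  (Htau_meas : measurable_fun setT tau)
  (Htau_ge0 : forall w, (0 <= tau w)%E)
  (Y : R -> Omega -> R)
  (HY : measurable_proc (predictable_sa (enlarged Q F tau)) Y) :
  exists (Y' : R -> Omega -> R) (Y'' : \bar R -> R -> Omega -> R),
    [/\ measurable_proc (optional_sa F) Y',
        measurable_param_proc F Y'' &
        exists N0 : set Omega,
          [/\ join_sa (sigma_rv tau) (F_infty F) N0, Q N0 = 0%E &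
              forall w, ~ N0 w -> forall t, 0 <= t ->
                Y t w = Y' t w * (if (t%:E < tau w)%E then 1 else 0)
                        + Y'' (tau w) t w * (if (tau w <= t%:E)%E then 1 else 0)]].
Proof.
have [Y1 [Y2 [N [m1 m2 [N' [[JN QN] ->]] h]]]] :=
  @Y_split R d Omega Q F tau HFsa HFmeas HFincr HFright Htau_meas Htau_ge0 Y HY.
exists (fun t w => Y1 (t, w)), (fun u t w => Y2 (u, (t, w))); split.
- exact: (@TO_proc R d Omega F Y1 m1).
- move=> B mB; have := m2 measurableT B mB; rewrite setTI => /(measTBO R d Omega F).
  rewrite /BOsa /= setIC; congr (borel_x_optional F (_ `&` _)).
  by apply/seteqP; split => -[u [t w]].
- exists N'; split => // w Nw t t0.
  have := h (t, w); rewrite /EP /pP1 /pP2 /= => ->; last first.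
    by move=> [|//]; rewrite ltNge t0.
  case: ifP => tw; first by rewrite leNgt tw /= mulr1 mulr0 addr0.
  by rewrite leNgt tw /= mulr0 mulr1 add0r.
Qed.
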